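(* Let $M>0$, $\beta^*>0$, and let $g$ be the log-normal density $g(t)=\frac{1}{t\sigma\sqrt{2\pi}}\exp\!\big(-\frac{(\ln t-\mu)^2}{2\sigma^2}\big)$ for $t>0$, $g(t)=0$ for $t\le0$ ($\mu\in\mathbb{R}$, $\sigma>0$). Let $I$ be the unique $C^1$ solution on $[0,\infty)$ of \[ I'(t)=\beta^*(M-I(t))\Big(I(t)-\int_0^t g(t-s)I(s)\,ds\Big),\qquad I(0)=I_0\in[0,M]. \] If $0<I_0<M$, then $I'(t)>0$ for all $t\ge0$; if $I_0=0$ or $I_0=M$, then $I'\equiv 0$. *)

(* Defs.v *)
From Stdlib Require Import Reals.
From Coquelicot Require Import Coquelicot.
Open Scope R_scope.

Definition lognormal (mu sigma : R) (t : R) : R :=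
  if Rle_dec t 0 then 0
  else / (t * sigma * sqrt (2 * PI)) * exp (- ((ln t - mu) ^ 2) / (2 * sigma ^ 2)).

Definition C1_on_nonneg (I dI : R -> R) : Prop :=
  (forall t, 0 < t -> is_derive I t (dI t)) /\
  filterlim (fun h => (I h - I 0) / h) (at_right 0) (locally (dI 0)) /\
  (forall t, 0 < t -> continuous dI t) /\
  filterlim dI (at_right 0) (locally (dI 0)).

Definition is_solution (beta M mu sigma I0 : R) (I dI : R -> R) : Prop :=
  C1_on_nonneg I dI /\ I 0 = I0 /\
  forall t, 0 <= t ->
    dI t = beta * (M - I t) * (I t - RInt (fun s => lognormal mu sigma (t - s) * I s) 0 t).

(* Main.v *)
Require Import Defs.
From Stdlib Require Import Reals Lra Psatz.
From Coquelicot Require Import Coquelicot.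
From Corelib Require Import ssreflect.
Open Scope R_scope.
Ltac Req := match goal with |- ?a = ?b => change (@eq R a b) end.


Lemma RInt_scal_R (f : R -> R) (k a b : R) : ex_RInt f a b ->
  RInt (fun x => k * f x) a b = k * RInt f a b.
Proof. intros H. exact (RInt_scal f a b k H). Qed.

Definition gs (t : R) := exp (- (t * t)).
Definition GI (x : R) := RInt gs 0 x.
Definition f2 (x t : R) := exp (- (x * x) * (1 + t * t)) / (1 + t * t).
Definition UI (x : R) := RInt (f2 x) 0 1.

Lemma gs_cont x : continuous gs x.
Proof. apply: ex_derive_continuous. unfold gs. auto_derive. auto. Qed.

Lemma ex_RInt_gs a b : ex_RInt gs a b.
Proof. apply: ex_RInt_continuous => z _. apply gs_cont. Qed.

Lemma GI_deriv (x : R) : is_derive GI x (gs x).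
Proof.
  apply: is_derive_RInt. apply: filter_forall => y. apply: RInt_correct. apply ex_RInt_gs.
  apply gs_cont.
Qed.

Lemma pos1t t : 0 < 1 + t * t.
Proof. nra. Qed.

Lemma f2_cont x t : continuous (f2 x) t.
Proof. apply: ex_derive_continuous. unfold f2. auto_derive. have := pos1t t. lra. Qed.

Lemma f2_Derive u v : Derive (fun z => f2 z v) u = -2 * u * exp (- (u * u) * (1 + v * v)).
Proof.
  apply: is_derive_unique. unfold f2. auto_derive. have := pos1t v. lra.
  have := pos1t v. intros. field. lra.
Qed.

Lemma UI_deriv (x : R) : is_derive UI x (- 2 * gs x * GI x).
Proof.
  have H := (is_derive_RInt_param f2 0 1 x).
  unfold UI.
  have -> : - 2 * gs x * GI x = RInt (fun t => Derive (fun u => f2 u t) x) 0 1.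
  { rewrite (RInt_ext _ (fun t => (-2 * exp (- (x*x))) * (x * gs (x * t + 0)))).
    2: { intros t _. rewrite f2_Derive. unfold gs. replace (- (x * x) * (1 + t * t)) with (- ((x * t + 0) * (x * t + 0)) + - (x * x)) by ring. rewrite exp_plus. match goal with |- ?a = ?b => change (@eq R a b) end. ring. }
    rewrite RInt_scal_R.
    2: { apply: ex_RInt_continuous => z _. apply: ex_derive_continuous. unfold gs. auto_derive. auto. }
    have := RInt_comp_lin gs x 0 0 1 (ex_RInt_gs _ _).
    unfold scal; simpl; unfold mult; simpl. intros ->.
    unfold GI. replace (x * 0 + 0) with 0 by ring. replace (x * 1 + 0) with x by ring. unfold gs. ring. }
  apply H.
  - apply: filter_forall => y t _. unfold f2. auto_derive. have := pos1t t. lra.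
  - intros t _. eapply continuity_2d_pt_ext. intros; symmetry; apply f2_Derive.
    apply continuity_2d_pt_mult. apply continuity_2d_pt_mult. apply continuity_2d_pt_const. apply continuity_2d_pt_id1.
    apply continuity_1d_2d_pt_comp. apply derivable_continuous_pt. apply derivable_pt_exp.
    apply continuity_2d_pt_mult. apply continuity_2d_pt_opp. apply continuity_2d_pt_mult; apply continuity_2d_pt_id1.
    apply continuity_2d_pt_plus. apply continuity_2d_pt_const. apply continuity_2d_pt_mult; apply continuity_2d_pt_id2.
  - apply: filter_forall => y. apply: ex_RInt_continuous => z _. apply f2_cont.
Qed.

Lemma h_deriv (x : R) : is_derive (fun x => GI x * GI x + UI x) x 0.
Proof.
  have H : is_derive (fun x => GI x * GI x + UI x) x (gs x * GI x + GI x * gs x + (- 2 * gs x * GI x)).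
  { apply: is_derive_plus. apply: is_derive_mult. apply GI_deriv. apply GI_deriv. intros; apply Rmult_comm. apply UI_deriv. }
  replace 0 with (gs x * GI x + GI x * gs x + (- 2 * gs x * GI x)) by ring. exact H.
Qed.

Lemma h_const x : GI x * GI x + UI x = PI / 4.
Proof.
  have Hc : forall y, continuity_pt (fun x => GI x * GI x + UI x) y.
  { intros y. apply continuity_pt_filterlim. apply: ex_derive_continuous. eexists. apply h_deriv. }
  have [c [_ Hc2]] := MVT_gen (fun x => GI x * GI x + UI x) 0 x (fun _ => 0) (fun y _ => h_deriv y) (fun y _ => Hc y).
  have H0 : GI 0 * GI 0 + UI 0 = PI / 4.
  { unfold GI. rewrite RInt_point. unfold UI.
    rewrite (RInt_ext _ (fun t => / (1 + t²))).
    2: { intros t _. unfold f2, Rsqr. rewrite Rmult_0_l Ropp_0 Rmult_0_l exp_0. Req. field. have := pos1t t. lra. }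
    rewrite (is_RInt_unique _ 0 1 (minus (atan 1) (atan 0))).
    rewrite atan_1 atan_0. unfold zero, minus, plus, opp; simpl. ring.
    apply: is_RInt_derive. intros; apply is_derive_atan.
    intros. apply: ex_derive_continuous. auto_derive. unfold Rsqr. have := pos1t x0. lra. }
  lra.
Qed.

Lemma UI_ge0 x : 0 <= UI x.
Proof.
  apply RInt_ge_0. lra. apply: ex_RInt_continuous => z _. apply f2_cont.
  intros t _. unfold f2. apply Rlt_le. apply Rdiv_lt_0_compat. apply exp_pos. apply pos1t.
Qed.

Lemma GI_bound x : Rabs (GI x) <= sqrt PI / 2.
Proof.
  have := h_const x. have := UI_ge0 x. intros H1 H2.
  have Hs : Rsqr (Rabs (GI x)) <= Rsqr (sqrt PI / 2).
  { rewrite <- Rsqr_abs. unfold Rsqr. replace (sqrt PI / 2 * (sqrt PI / 2)) with ((sqrt PI * sqrt PI)/4) by field.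
    rewrite sqrt_sqrt. lra. have := PI_RGT_0. lra. }
  apply Rsqr_incr_0; auto. apply Rabs_pos. have := sqrt_pos PI. lra.
Qed.

Lemma ball_R (x e y : R) : ball x e y <-> Rabs (y - x) < e.
Proof. reflexivity. Qed.

Lemma sq2pi_pos : 0 < sqrt (2 * PI).
Proof. apply sqrt_lt_R0. have := PI_RGT_0. lra. Qed.

Lemma logn_pos mu sigma t : 0 < sigma -> 0 < t -> 0 < lognormal mu sigma t.
Proof.
  intros Hs Ht. unfold lognormal. destruct (Rle_dec t 0). lra.
  apply Rmult_lt_0_compat. apply Rinv_0_lt_compat. have := sq2pi_pos. intros. 
  apply Rmult_lt_0_compat; [nra|auto]. apply exp_pos.
Qed.

Lemma logn_ge0 mu sigma t : 0 < sigma -> 0 <= lognormal mu sigma t.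
Proof.
  intros Hs. destruct (Rle_dec t 0) as [H|H].
  unfold lognormal. destruct (Rle_dec t 0). lra. lra.
  apply Rlt_le, logn_pos; lra.
Qed.

Lemma logn_le0 mu sigma t : t <= 0 -> lognormal mu sigma t = 0.
Proof. intros H. unfold lognormal. destruct (Rle_dec t 0). auto. lra. Qed.

Definition lnf (mu sigma t : R) :=
  / (t * sigma * sqrt (2 * PI)) * exp (- ((ln t - mu) ^ 2) / (2 * sigma ^ 2)).

Lemma logn_gt0 mu sigma t : 0 < t -> lognormal mu sigma t = lnf mu sigma t.
Proof. intros H. unfold lognormal. destruct (Rle_dec t 0). lra. auto. Qed.

Lemma logn_cont_pos mu sigma t : 0 < sigma -> 0 < t -> continuous (lognormal mu sigma) t.
Proof.
  intros Hs Ht.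
  apply: (continuous_ext_loc _ (lnf mu sigma)).
  exists (mkposreal t Ht). intros y Hy. rewrite ball_R /= in Hy.
  rewrite logn_gt0 //. have := Rabs_def2 _ _ Hy. lra.
  apply: ex_derive_continuous. unfold lnf. auto_derive. have := sq2pi_pos. intros. split; [apply Rgt_not_eq; apply Rmult_lt_0_compat; [nra|auto] | auto].
Qed.

Lemma logn_cont_neg mu sigma t : t < 0 -> continuous (lognormal mu sigma) t.
Proof.
  intros Ht.
  apply: (continuous_ext_loc _ (fun _ => 0)).
  have Ht' : 0 < - t by lra.
  exists (mkposreal _ Ht'). intros y Hy. rewrite ball_R /= in Hy.
  rewrite logn_le0 //. have := Rabs_def2 _ _ Hy. lra.
  apply continuous_const.
Qed.

Lemma logn_cont0 mu sigma : 0 < sigma -> continuous (lognormal mu sigma) 0.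
Proof.
  intros Hs.
  have H0 : lognormal mu sigma 0 = 0 by apply logn_le0; lra. rewrite /continuous H0.
  apply/filterlim_locally => eps.
  set C := / (sigma * sqrt (2 * PI)).
  have HC : 0 < C. { unfold C. apply Rinv_0_lt_compat. have := sq2pi_pos. nra. }
  set L := ln (eps / C).
  set Z := 4 * sigma ^ 2 + Rabs mu + Rabs L + 1.
  have Hd : 0 < exp (mu - Z) by apply exp_pos.
  exists (mkposreal _ Hd). intros y Hy. rewrite ball_R /= in Hy. rewrite ball_R.
  destruct (Rle_dec y 0) as [Hy0|Hy0].
  { rewrite logn_le0 //. rewrite Rminus_0_r Rabs_R0. apply cond_pos. }
  have Hy1 : 0 < y by lra.
  rewrite logn_gt0 // Rminus_0_r Rabs_pos_eq; last first. { apply Rlt_le. by move: (logn_pos mu sigma y Hs Hy1); rewrite logn_gt0. }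
  have Hly : ln y < mu - Z.
  { rewrite -(ln_exp (mu - Z)). apply ln_increasing. auto. have := Rabs_def2 _ _ Hy. lra. }
  set z := mu - ln y.
  have Hz : z > Z by (unfold z; lra).
  have HZ1 : Z = 4 * sigma ^ 2 + Rabs mu + Rabs L + 1 by reflexivity.
  have Hma : - Rabs mu <= mu <= Rabs mu by (split; unfold Rabs; destruct (Rcase_abs mu); lra).
  have HLa : - Rabs L <= L <= Rabs L by (split; unfold Rabs; destruct (Rcase_abs L); lra).
  have Hsq : z ^ 2 / (2 * sigma ^ 2) >= 2 * z.
  { apply Rle_ge. apply Rmult_le_reg_r with (2 * sigma ^ 2). nra.
    replace (z ^ 2 / (2 * sigma ^ 2) * (2 * sigma ^ 2)) with (z ^ 2) by (field; nra). have Hz4 : z >= 4 * sigma ^ 2 by (have := Rabs_pos mu; have := Rabs_pos L; lra). have Hz0 : 0 <= z by nra. nra. }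
  have HE : - ln y + - ((ln y - mu) ^ 2) / (2 * sigma ^ 2) < L.
  { replace ((ln y - mu) ^ 2) with (z ^ 2) by (unfold z; ring).
    replace (- (z ^ 2) / (2 * sigma ^ 2)) with (- (z ^ 2 / (2 * sigma ^ 2))) by (field; nra).
    replace (- ln y) with (z - mu) by (unfold z; ring). have := pow2_ge_0 sigma. lra. }
  unfold lnf.
  replace (/ (y * sigma * sqrt (2 * PI))) with (C * exp (- ln y)).
  2: { rewrite exp_Ropp exp_ln //. unfold C. field. have := sq2pi_pos. split; nra. }
  rewrite Rmult_assoc -exp_plus.
  have H1 : exp (- ln y + - ((ln y - mu) ^ 2) / (2 * sigma ^ 2)) < eps / C.
  { have Hp : 0 < eps / C by (apply Rdiv_lt_0_compat; [apply cond_pos|auto]).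
    rewrite -(exp_ln (eps / C)) //. apply exp_increasing. exact HE. }
  have := Rmult_lt_compat_l C _ _ HC H1. replace (C * (eps / C)) with (pos eps) by (Req; field; lra). auto.
Qed.

Lemma logn_cont mu sigma t : 0 < sigma -> continuous (lognormal mu sigma) t.
Proof.
  intros Hs. destruct (Rlt_le_dec 0 t). apply logn_cont_pos; auto.
  destruct (Rle_lt_or_eq_dec _ _ r). apply logn_cont_neg; auto.
  subst. apply logn_cont0; auto.
Qed.

Lemma logn_int_eps mu sigma e t : 0 < sigma -> 0 < e -> e <= t ->
  RInt (lognormal mu sigma) e t <= 1.
Proof.
  intros Hs He Het.
  have Hs2 : 0 < sqrt 2 by (apply sqrt_lt_R0; lra).
  have HsP : 0 < sqrt PI by (apply sqrt_lt_R0; have := PI_RGT_0; lra).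
  set k := sigma * sqrt 2.
  have Hk : 0 < k by (unfold k; nra).
  set wa := (ln e - mu) / k.
  set wb := (ln t - mu) / k.
  have Ha : exp (mu + k * wa) = e. { unfold wa. replace (mu + k * ((ln e - mu) / k)) with (ln e) by (Req; field; lra). apply exp_ln; auto. }
  have Hb : exp (mu + k * wb) = t. { unfold wb. replace (mu + k * ((ln t - mu) / k)) with (ln t) by (Req; field; lra). apply exp_ln; lra. }
  have Hc := RInt_comp (lognormal mu sigma) (fun w => exp (mu + k * w)) (fun w => k * exp (mu + k * w)) wa wb.
  rewrite Ha Hb in Hc. rewrite -Hc.
  - rewrite (RInt_ext _ (fun w => / sqrt PI * gs w)).
    + rewrite RInt_scal_R; last by apply ex_RInt_gs.
      have Hch := RInt_Chasles gs 0 wa wb (ex_RInt_gs _ _) (ex_RInt_gs _ _).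
      have -> : RInt gs wa wb = GI wb - GI wa.
      { unfold GI. have Hch2 : @eq R (Rplus (RInt gs 0 wa) (RInt gs wa wb)) (RInt gs 0 wb) := Hch. lra. }
      have := GI_bound wa. have := GI_bound wb. intros H1 H2.
      have H3 : GI wb - GI wa <= sqrt PI.
      { have := Rle_abs (GI wb). have := Rle_abs (- GI wa). rewrite Rabs_Ropp. lra. }
      apply Rmult_le_reg_l with (sqrt PI); auto. rewrite -Rmult_assoc Rinv_r. lra. lra.
    + intros w _. unfold scal; simpl; unfold mult; simpl.
      have Hp : 0 < exp (mu + k * w) by apply exp_pos.
      rewrite logn_gt0 //. unfold lnf, gs. rewrite ln_exp.
      replace (- ((mu + k * w - mu) ^ 2) / (2 * sigma ^ 2)) with (- (w * w)).
      2: { Req. unfold k. field_simplify. rewrite /= !Rmult_1_r.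
           replace (sqrt 2 * sqrt 2) with 2 by (rewrite sqrt_sqrt; lra). field. lra. lra. }
      rewrite sqrt_mult; try lra. 2: { have := PI_RGT_0; lra. }
      unfold k. Req. field. have := exp_pos (mu + sigma * sqrt 2 * w). repeat split; lra.
  - intros x _. apply logn_cont; auto.
  - intros x _. split. auto_derive. auto. Req. ring.
    apply: ex_derive_continuous. auto_derive. auto.
Qed.

Lemma ex_RInt_logn mu sigma a b : 0 < sigma -> ex_RInt (lognormal mu sigma) a b.
Proof. intros Hs. apply: ex_RInt_continuous => z _. apply logn_cont; auto. Qed.

Lemma logn_int_le1 mu sigma t : 0 < sigma -> 0 <= t ->
  RInt (lognormal mu sigma) 0 t <= 1.
Proof.
  intros Hs Ht.
  destruct (Req_dec t 0) as [->|Ht0].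
  { rewrite RInt_point. unfold zero; simpl. lra. }
  set F := fun x => RInt (lognormal mu sigma) 0 x.
  have HF : continuous F 0.
  { apply: ex_derive_continuous. eexists. apply: is_derive_RInt.
    apply: filter_forall => y. apply: RInt_correct. apply ex_RInt_logn; auto.
    apply logn_cont; auto. }
  destruct (Rle_or_lt (F t) 1) as [H|H]. exact H.
  exfalso.
  have Hd : 0 < F t - 1 by lra.
  have := proj1 (filterlim_locally F (F 0)) HF (mkposreal _ Hd).
  move=> [δ Hδ].
  set e := Rmin (δ / 2) t.
  have He : 0 < e by (apply Rmin_glb_lt; [have := cond_pos δ; lra | lra]).
  have Het : e <= t by apply Rmin_r.
  have Heδ : e <= δ / 2 by apply Rmin_l.
  have H1 := Hδ e. rewrite !ball_R /= in H1.
  have H1' : Rabs (F e - F 0) < F t - 1.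
  { apply H1. rewrite Rminus_0_r Rabs_pos_eq; [|lra]. have := cond_pos δ. lra. }
  have HF0 : F 0 = 0 by (unfold F; rewrite RInt_point; reflexivity).
  rewrite HF0 Rminus_0_r in H1'.
  have Hch := RInt_Chasles (lognormal mu sigma) 0 e t (ex_RInt_logn _ _ _ _ Hs) (ex_RInt_logn _ _ _ _ Hs).
  have Hch2 : @eq R (Rplus (F e) (RInt (lognormal mu sigma) e t)) (F t) := Hch.
  have := logn_int_eps mu sigma e t Hs He Het.
  have := Rle_abs (F e). lra.
Qed.

Lemma mvt_open (f df : R -> R) a b : a < b ->
  (forall x, a < x < b -> is_derive f x (df x)) ->
  (forall x, a <= x <= b -> continuity_pt f x) ->
  exists c, a < c < b /\ f b - f a = df c * (b - a).
Proof.
  intros Hab Hd Hc.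
  have pr1 : forall c, a < c < b -> derivable_pt f c.
  { intros c P. exists (df c). apply is_derive_Reals. apply Hd. exact P. }
  have := MVT f id a b (fun c P => exist _ (df c) (proj1 (is_derive_Reals _ _ _) (Hd c P))) (fun c _ => derivable_pt_id c) Hab Hc.
  move=> /(_ (fun c _ => derivable_continuous_pt _ _ (derivable_pt_id c))) [c [P H]].
  exists c. split; auto. rewrite derive_pt_id in H. simpl in H. unfold id in H. lra.
Qed.

Lemma zero_lemma (w dw : R -> R) :
  (forall s, continuous w s) -> w 0 = 0 ->
  (forall t, 0 < t -> is_derive w t (dw t)) ->
  (forall T, 0 < T -> exists K, 0 <= K /\ forall t m, 0 < t <= T ->
      (forall s, 0 <= s <= t -> Rabs (w s) <= m) -> Rabs (dw t) <= K * m) ->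
  forall t, 0 <= t -> w t = 0.
Proof.
  intros Hc H0 Hd HK T HT.
  destruct (Req_dec T 0) as [->|HT0]; auto.
  have HTp : 0 < T by lra.
  destruct (HK T HTp) as [K [HK0 HKb]].
  set δ := / (2 * (K + 1)).
  have Hδ : 0 < δ by (unfold δ; apply Rinv_0_lt_compat; lra).
  have HKδ : K * δ <= / 2.
  { unfold δ. apply Rmult_le_reg_r with (2 * (K + 1)). lra.
    rewrite Rmult_assoc Rinv_l; lra. }
  have Hcp : forall s, continuity_pt w s by (intros s; apply continuity_pt_filterlim; apply Hc).
  have Hcabs : forall s, continuity_pt (fun s => Rabs (w s)) s.
  { intros s. apply (continuity_pt_comp w Rabs). apply Hcp. apply Rcontinuity_abs. }
  have Hind : forall n : nat, forall s, 0 <= s <= Rmin (INR n * δ) T -> w s = 0.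
  { induction n as [|n IH].
    - intros s Hs. have Hm : Rmin (INR 0 * δ) T = 0 by (rewrite /= Rmult_0_l; apply Rmin_left; lra). rewrite Hm in Hs. have -> : s = 0 by lra. auto.
    - set a := Rmin (INR n * δ) T. set b := Rmin (INR (S n) * δ) T.
      have Haeq : a = Rmin (INR n * δ) T by reflexivity.
      have HSn : INR (S n) = INR n + 1 by apply S_INR.
      have Hn0 : 0 <= INR n by apply pos_INR.
      have Ha0 : 0 <= a by (unfold a; apply Rmin_glb; nra).
      have Hab : a <= b by (unfold a, b; rewrite HSn; apply Rle_min_compat_r; nra).
      have Hba : b - a <= δ.
      { unfold a, b. rewrite HSn. unfold Rmin. destruct (Rle_dec (INR n * δ) T); destruct (Rle_dec ((INR n + 1) * δ) T); nra. }
      have HbT : b <= T by (unfold b; apply Rmin_r).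
      have Hb0 : 0 <= b by lra.
      destruct (continuity_ab_maj (fun s => Rabs (w s)) 0 b Hb0 (fun c _ => Hcabs c)) as [t0 [Hmax Ht0]].
      set m := Rabs (w t0).
      suff Hm : m <= 0.
      { intros s Hs. have Hx1 := Hmax s Hs. have Hx2 := Rabs_pos (w s). simpl in Hx1. fold m in Hx1.
        apply Rabs_eq_0. lra. }
      destruct (Rle_or_lt t0 a) as [Hta|Hta].
      { have Hw0 : w t0 = 0 by (apply IH; split; lra). unfold m. rewrite Hw0 Rabs_R0. lra. }
      have Hcont : forall x, a <= x <= t0 -> continuity_pt w x by (intros; apply Hcp).
      destruct (mvt_open w dw a t0 Hta (fun x Hx => Hd x ltac:(lra)) Hcont) as [c [Hc1 Hc2]].
      have Hwa : w a = 0 by (apply IH; split; lra).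
      rewrite Hwa Rminus_0_r in Hc2.
      have Hdc : Rabs (dw c) <= K * m.
      { apply HKb. split; lra. intros s Hs. apply Hmax. lra. }
      have Hm0 : 0 <= m by apply Rabs_pos.
      have : m <= K * m * δ.
      { unfold m at 1. rewrite Hc2 Rabs_mult (Rabs_pos_eq (t0 - a)); [|lra].
        apply Rmult_le_compat; try lra. apply Rabs_pos. }
      nra. }
  destruct (INR_unbounded (T / δ)) as [n Hn].
  apply (Hind n). split. lra. rewrite Rmin_right. lra.
  have : T / δ * δ = T by (field; lra). nra.
Qed.

Definition ext0 (I : R -> R) (s : R) := I (Rmax 0 s).

Lemma ext0_pos I s : 0 <= s -> ext0 I s = I s.
Proof. intros H. unfold ext0. rewrite Rmax_right //. Qed.

Lemma ext0_cont I dI : C1_on_nonneg I dI -> forall s, continuous (ext0 I) s.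
Proof.
  move=> [Hd [Hr [Hcd Hcr]]] s.
  destruct (Rlt_le_dec 0 s) as [Hs|Hs].
  { apply: (continuous_ext_loc _ I).
    exists (mkposreal s Hs). intros y Hy. rewrite ball_R /= in Hy.
    have := Rabs_def2 _ _ Hy. intros. rewrite ext0_pos //. lra.
    apply: ex_derive_continuous. exists (dI s). apply Hd; auto. }
  destruct (Rle_lt_or_eq_dec _ _ Hs) as [Hs'|Hs'].
  { apply: (continuous_ext_loc _ (fun _ => I 0)).
    have Hp : 0 < - s by lra.
    exists (mkposreal _ Hp). intros y Hy. rewrite ball_R /= in Hy.
    have := Rabs_def2 _ _ Hy. intros. unfold ext0. rewrite Rmax_left //. lra.
    apply continuous_const. }
  subst s. apply/filterlim_locally => eps.
  have := proj1 (filterlim_locally _ (dI 0)) Hr (mkposreal 1 Rlt_0_1).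
  move=> [d1 Hd1].
  set c := Rabs (dI 0) + 1.
  have Hc : 0 < c by (have := Rabs_pos (dI 0); unfold c; lra).
  have Hd2 : 0 < Rmin d1 (eps / c).
  { apply Rmin_glb_lt. apply cond_pos. apply Rdiv_lt_0_compat; [apply cond_pos|auto]. }
  exists (mkposreal _ Hd2). intros y Hy. rewrite ball_R /= in Hy. rewrite ball_R.
  unfold ext0. have -> : Rmax 0 0 = 0 by (apply Rmax_left; lra).
  destruct (Rle_or_lt y 0) as [Hy0|Hy0].
  { rewrite Rmax_left //. rewrite Rminus_diag Rabs_R0. apply cond_pos. }
  have -> : Rmax 0 y = y by (apply Rmax_right; lra).
  rewrite Rminus_0_r in Hy.
  have Hyd1 : Rabs (y - 0) < d1 by (rewrite Rminus_0_r; have := Rmin_l d1 (eps / c); lra).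
  have H1 := Hd1 y Hyd1 Hy0. rewrite ball_R /= in H1.
  have Hyc : y < eps / c by (have := Rmin_r d1 (eps / c); rewrite (Rabs_pos_eq y (Rlt_le _ _ Hy0)) in Hy; lra).
  have Hq : Rabs ((I y - I 0) / y) <= c.
  { have := Rabs_triang_inv ((I y - I 0) / y) (dI 0). unfold c. lra. }
  replace (I y - I 0) with (y * ((I y - I 0) / y)) by (Req; field; lra).
  rewrite Rabs_mult (Rabs_pos_eq y (Rlt_le _ _ Hy0)).
  apply Rle_lt_trans with (y * c). apply Rmult_le_compat_l; lra.
  apply Rmult_lt_reg_r with (/ c). apply Rinv_0_lt_compat; auto.
  rewrite Rmult_assoc Rinv_r. lra. lra.
Qed.

Lemma ext0_deriv I dI : C1_on_nonneg I dI -> forall t, 0 < t -> is_derive (ext0 I) t (dI t).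
Proof.
  move=> [Hd _] t Ht. apply: (is_derive_ext_loc I). 
  exists (mkposreal t Ht). intros y Hy. rewrite ball_R /= in Hy.
  have := Rabs_def2 _ _ Hy. intros. rewrite ext0_pos //. lra.
  apply Hd; auto.
Qed.

Lemma ext0_cpt I dI : C1_on_nonneg I dI -> forall s, continuity_pt (ext0 I) s.
Proof. intros H s. apply continuity_pt_filterlim. apply: ext0_cont H s. Qed.

Lemma conv_cont mu sigma (v : R -> R) t : 0 < sigma -> (forall s, continuous v s) ->
  forall s, continuous (fun s => lognormal mu sigma (t - s) * v s) s.
Proof.
  intros Hs Hv s.
  apply: (continuous_mult (fun s => lognormal mu sigma (t - s)) v); last by apply Hv.
  apply: (continuous_comp (fun s => t - s) (lognormal mu sigma)).
  apply: ex_derive_continuous. auto_derive. auto.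
  apply logn_cont; auto.
Qed.

Lemma ex_RInt_conv mu sigma (v : R -> R) t a b : 0 < sigma -> (forall s, continuous v s) ->
  ex_RInt (fun s => lognormal mu sigma (t - s) * v s) a b.
Proof. intros Hs Hv. apply: ex_RInt_continuous => z _. apply conv_cont; auto. Qed.

Lemma ex_RInt_rev mu sigma t a b : 0 < sigma ->
  ex_RInt (fun s => lognormal mu sigma (t - s)) a b.
Proof.
  intros Hs. apply: ex_RInt_continuous => z _.
  apply: (continuous_comp (fun s => t - s) (lognormal mu sigma)).
  apply: ex_derive_continuous. auto_derive. auto.
  apply logn_cont; auto.
Qed.

Lemma RInt_rev mu sigma t : 0 < sigma ->
  RInt (fun s => lognormal mu sigma (t - s)) 0 t = RInt (lognormal mu sigma) 0 t.
Proof.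
  intros Hs.
  have H := RInt_comp_lin (lognormal mu sigma) (-1) t 0 t (ex_RInt_logn _ _ _ _ Hs).
  replace (-1 * 0 + t) with t in H by ring.
  replace (-1 * t + t) with 0 in H by ring.
  rewrite -(opp_RInt_swap _ _ _ (ex_RInt_logn _ _ _ _ Hs)) -H.
  unfold scal; simpl; unfold mult; simpl.
  have E : RInt (fun y => -1 * lognormal mu sigma (-1 * y + t)) 0 t = RInt (fun y => -1 * lognormal mu sigma (t - y)) 0 t.
  { apply RInt_ext. intros x _. Req. f_equal. f_equal. ring. }
  rewrite E (RInt_scal_R _ _ _ _ (ex_RInt_rev mu sigma t 0 t Hs)).
  unfold opp; simpl. have HH : forall X : R, X = - (-1 * X) by (intros; ring). apply HH.
Qed.

Lemma rev_bounds mu sigma t : 0 < sigma -> 0 <= t ->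
  0 <= RInt (fun s => lognormal mu sigma (t - s)) 0 t <= 1.
Proof.
  intros Hs Ht. rewrite RInt_rev //. split.
  apply RInt_ge_0; auto. apply ex_RInt_logn; auto. intros; apply logn_ge0; auto.
  apply logn_int_le1; auto.
Qed.

Lemma conv_abs mu sigma (v : R -> R) t m : 0 < sigma -> (forall s, continuous v s) -> 0 <= t ->
  (forall s, 0 <= s <= t -> Rabs (v s) <= m) ->
  Rabs (RInt (fun s => lognormal mu sigma (t - s) * v s) 0 t) <= m.
Proof.
  intros Hs Hv Ht Hm.
  have Hm0 : 0 <= m by (have := Hm 0 ltac:(lra); have := Rabs_pos (v 0); lra).
  have Hb := rev_bounds mu sigma t Hs Ht.
  have Hex := ex_RInt_rev mu sigma t 0 t Hs.
  apply Rabs_le. split.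
  - apply Rle_trans with (RInt (fun s => (- m) * lognormal mu sigma (t - s)) 0 t).
    + rewrite RInt_scal_R //. nra.
    + apply RInt_le; auto. apply: ex_RInt_scal. auto. apply ex_RInt_conv; auto.
      intros x Hx. have := Hm x ltac:(lra). have := logn_ge0 mu sigma (t - x) Hs.
      intros H1 H2. have Hvx : - m <= v x by (have := Rle_abs (- v x); rewrite Rabs_Ropp; lra). nra.
  - apply Rle_trans with (RInt (fun s => m * lognormal mu sigma (t - s)) 0 t).
    + apply RInt_le; auto. apply ex_RInt_conv; auto. apply: ex_RInt_scal. auto.
      intros x Hx. have := Hm x ltac:(lra). have := logn_ge0 mu sigma (t - x) Hs.
      intros H1 H2. have Hvx : v x <= m by (have := Rle_abs (v x); lra). nra.
    + rewrite RInt_scal_R //. nra.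
Qed.

Lemma conv_ge0 mu sigma (v : R -> R) t : 0 < sigma -> (forall s, continuous v s) -> 0 <= t ->
  (forall s, 0 <= s <= t -> 0 <= v s) ->
  0 <= RInt (fun s => lognormal mu sigma (t - s) * v s) 0 t.
Proof.
  intros Hs Hv Ht Hp. apply RInt_ge_0; auto. apply ex_RInt_conv; auto.
  intros x Hx. apply Rmult_le_pos. apply logn_ge0; auto. apply Hp; lra.
Qed.

Lemma conv_lt mu sigma (v : R -> R) t : 0 < sigma -> (forall s, continuous v s) -> 0 < t ->
  (forall s, 0 < s < t -> v s < v t) -> 0 <= v t ->
  RInt (fun s => lognormal mu sigma (t - s) * v s) 0 t < v t.
Proof.
  intros Hs Hv Ht Hlt Hvt.
  apply Rlt_le_trans with (RInt (fun s => v t * lognormal mu sigma (t - s)) 0 t).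
  - apply RInt_lt; auto.
    + intros x _. apply: (continuous_mult (fun _ => v t) (fun s => lognormal mu sigma (t - s))).
      apply continuous_const. apply: (continuous_comp (fun s => t - s) (lognormal mu sigma)).
      apply: ex_derive_continuous. auto_derive. auto. apply logn_cont; auto.
    + intros x _. apply conv_cont; auto.
    + intros x Hx. have := logn_pos mu sigma (t - x) Hs ltac:(lra). have := Hlt x Hx. nra.
  - rewrite (RInt_scal_R _ _ _ _ (ex_RInt_rev mu sigma t 0 t Hs)).
    have := rev_bounds mu sigma t Hs ltac:(lra). nra.
Qed.

Lemma conv_ext0 mu sigma I t : 0 <= t ->
  RInt (fun s => lognormal mu sigma (t - s) * I s) 0 t =
  RInt (fun s => lognormal mu sigma (t - s) * ext0 I s) 0 t.
Proof.
  intros Ht. apply RInt_ext. intros x Hx. rewrite (Rmin_left 0 t Ht) in Hx.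
  rewrite ext0_pos //. lra.
Qed.

Lemma sup_bound (f : R -> R) T : 0 <= T -> (forall s, continuous f s) ->
  exists B, 0 <= B /\ forall s, 0 <= s <= T -> Rabs (f s) <= B.
Proof.
  intros HT Hc.
  have Hcp : forall s, continuity_pt (fun s => Rabs (f s)) s.
  { intros s. apply (continuity_pt_comp f Rabs). apply continuity_pt_filterlim. apply Hc. apply Rcontinuity_abs. }
  destruct (continuity_ab_maj (fun s => Rabs (f s)) 0 T HT (fun c _ => Hcp c)) as [tm [Hmax _]].
  exists (Rabs (f tm)). split. apply Rabs_pos. exact Hmax.
Qed.

Lemma Rabs_sub_le a b : Rabs (a - b) <= Rabs a + Rabs b.
Proof. have := Rabs_triang a (- b). rewrite Rabs_Ropp. auto. Qed.

Lemma part2 (M beta mu sigma I0 : R) (I dI : R -> R)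
  (hM : 0 < M) (hbeta : 0 < beta) (hsigma : 0 < sigma)
  (hsol : is_solution beta M mu sigma I0 I dI) :
  ((I0 = 0 \/ I0 = M) -> forall t, 0 <= t -> dI t = 0).
Proof.
  destruct hsol as [HC [HI0 Hode]].
  have Hiec := ext0_cont I dI HC.
  have Hied := ext0_deriv I dI HC.
  have HdI0 : dI 0 = beta * (M - I0) * I0.
  { rewrite Hode; [|lra]. rewrite RInt_point HI0. unfold zero; simpl. ring. }
  intros [H0|HM] t Ht.
  - have HK : forall T, 0 < T -> exists K, 0 <= K /\ forall t m, 0 < t <= T ->
      (forall s, 0 <= s <= t -> Rabs (ext0 I s) <= m) -> Rabs (dI t) <= K * m.
    { intros T HT. destruct (sup_bound (ext0 I) T ltac:(lra) Hiec) as [B [HB0 HB]].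
      exists (beta * (M + B) * 2). split. nra.
      intros t' m Ht' Hm.
      have Hm0 : 0 <= m by (have := Hm 0 ltac:(lra); have := Rabs_pos (ext0 I 0); lra).
      rewrite Hode; [|lra]. rewrite conv_ext0; [|lra].
      have Hc := conv_abs mu sigma (ext0 I) t' m hsigma Hiec ltac:(lra) Hm.
      have Hit : Rabs (I t') <= m by (rewrite -(ext0_pos I t'); [|lra]; apply Hm; lra).
      have HiB : Rabs (I t') <= B by (rewrite -(ext0_pos I t'); [|lra]; apply HB; lra).
      have HJ := Rabs_sub_le (I t') (RInt (fun s => lognormal mu sigma (t' - s) * ext0 I s) 0 t').
      have HMI : Rabs (M - I t') <= M + B by (have := Rabs_sub_le M (I t'); rewrite (Rabs_pos_eq M); lra).
      rewrite !Rabs_mult (Rabs_pos_eq beta); [|lra].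
      have := Rabs_pos (M - I t'). have := Rabs_pos (I t' - RInt (fun s => lognormal mu sigma (t' - s) * ext0 I s) 0 t').
      intros. 
      apply Rle_trans with (beta * (M + B) * (m + m)). apply Rmult_le_compat; try nra. lra. }
    have Hz := zero_lemma (ext0 I) dI Hiec ltac:(rewrite ext0_pos; lra) Hied HK t Ht.
    destruct (Req_dec t 0) as [->|Htn]. rewrite HdI0 H0. ring.
    destruct (HK t ltac:(lra)) as [K [HK0 HKb]].
    have := HKb t 0 ltac:(lra). intros HH.
    have := HH (fun s Hs => ltac:(rewrite (zero_lemma (ext0 I) dI Hiec ltac:(rewrite ext0_pos; lra) Hied HK s ltac:(lra)) Rabs_R0; lra)).
    rewrite Rmult_0_r. intros Ha. have := Rabs_pos (dI t). intros. apply Rabs_eq_0. lra.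
  - set w := fun s => ext0 I s - M.
    have Hwc : forall s, continuous w s.
    { intros s. apply: (continuous_minus (ext0 I) (fun _ => M)). apply Hiec. apply continuous_const. }
    have Hwd : forall t, 0 < t -> is_derive w t (dI t).
    { intros t' Ht'. have := is_derive_minus (ext0 I) (fun _ => M) t' (dI t') zero (Hied t' Ht') (is_derive_const M t').
      have -> : minus (dI t') zero = dI t' by (unfold minus, zero, plus, opp; simpl; Req; ring). auto. }
    have HK : forall T, 0 < T -> exists K, 0 <= K /\ forall t m, 0 < t <= T ->
      (forall s, 0 <= s <= t -> Rabs (w s) <= m) -> Rabs (dI t) <= K * m.
    { intros T HT. destruct (sup_bound (ext0 I) T ltac:(lra) Hiec) as [B [HB0 HB]].
      exists (beta * (B + B)). split. nra.
      intros t' m Ht' Hm.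
      have Hm0 : 0 <= m by (have := Hm 0 ltac:(lra); have := Rabs_pos (w 0); lra).
      rewrite Hode; [|lra]. rewrite conv_ext0; [|lra].
      have Hc := conv_abs mu sigma (ext0 I) t' B hsigma Hiec ltac:(lra) (fun s Hs => HB s ltac:(lra)).
      have HiB : Rabs (I t') <= B by (rewrite -(ext0_pos I t'); [|lra]; apply HB; lra).
      have HJ := Rabs_sub_le (I t') (RInt (fun s => lognormal mu sigma (t' - s) * ext0 I s) 0 t').
      have HMI : Rabs (M - I t') <= m.
      { have := Hm t' ltac:(lra). unfold w. rewrite ext0_pos; [|lra]. rewrite -Rabs_Ropp. 
        have -> : - (I t' - M) = M - I t' by ring. auto. }
      rewrite !Rabs_mult (Rabs_pos_eq beta); [|lra].
      have := Rabs_pos (M - I t'). have := Rabs_pos (I t' - RInt (fun s => lognormal mu sigma (t' - s) * ext0 I s) 0 t').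
      intros.
      apply Rle_trans with (beta * m * (B + B)). apply Rmult_le_compat; try nra. lra. }
    have Hz := zero_lemma w dI Hwc ltac:(unfold w; rewrite ext0_pos; lra) Hwd HK t Ht.
    unfold w in Hz. rewrite ext0_pos in Hz; [|lra].
    rewrite Hode //. have -> : M - I t = 0 by lra. ring.
Qed.

Lemma part1 (M beta mu sigma I0 : R) (I dI : R -> R)
  (hM : 0 < M) (hbeta : 0 < beta) (hsigma : 0 < sigma)
  (hsol : is_solution beta M mu sigma I0 I dI) :
  (0 < I0 < M -> forall t, 0 <= t -> 0 < dI t).
Proof.
  destruct hsol as [HC [HI0 Hode]].
  have HC' := HC. destruct HC' as [Hd [Hr [Hcd Hcr]]].
  have Hiec := ext0_cont I dI HC.
  have Hied := ext0_deriv I dI HC.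
  have HdI0 : dI 0 = beta * (M - I0) * I0.
  { rewrite Hode; [|lra]. rewrite RInt_point HI0. unfold zero; simpl. ring. }
  intros [Ha Hb] t Ht.
  destruct (Rlt_or_le 0 (dI t)) as [Hp|Hn]; [exact Hp|exfalso].
  have HdI0p : 0 < dI 0 by (rewrite HdI0; apply Rmult_lt_0_compat; [apply Rmult_lt_0_compat|]; lra).
  set E := fun x => 0 <= x <= t /\ forall s, 0 <= s <= x -> 0 < dI s.
  have HE0 : E 0.
  { split. lra. intros s Hs. have -> : s = 0 by lra. auto. }
  have HEb : bound E by (exists t; intros x [Hx _]; lra).
  destruct (completeness E HEb (ex_intro _ 0 HE0)) as [ts [Hub Hlub]].
  have Hts0 : 0 <= ts := Hub 0 HE0.
  have Htst : ts <= t by (apply Hlub; intros x [Hx _]; lra).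
  have Hbefore : forall s, 0 <= s < ts -> 0 < dI s.
  { intros s Hs. destruct (Rlt_or_le 0 (dI s)) as [H|Hn']; auto. exfalso.
    have Hubs : is_upper_bound E s.
    { intros x [Hx1 Hx2]. destruct (Rle_or_lt x s) as [|Hxs]; auto.
      have := Hx2 s ltac:(lra). lra. }
    have := Hlub s Hubs. lra. }
  have Hat : dI ts <= 0.
  { destruct (Rle_or_lt (dI ts) 0) as [|Hpos]; auto. exfalso.
    have Htst' : ts < t.
    { destruct (Rle_lt_or_eq_dec _ _ Htst) as [|Heq]; auto. rewrite Heq in Hpos. lra. }
    have Hdel : exists d, 0 < d /\ forall y, ts < y < ts + d -> 0 < dI y.
    { destruct (Req_dec ts 0) as [Hz|Hnz].
      - rewrite Hz in Hpos |- *.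
        have := proj1 (filterlim_locally _ (dI 0)) Hcr (mkposreal _ Hpos).
        move=> [d Hdd]. exists d. split. apply cond_pos.
        intros y Hy. have := Hdd y. rewrite !ball_R /=. intros HH.
        have := HH ltac:(rewrite Rminus_0_r Rabs_pos_eq; lra) ltac:(lra).
        intros HH2. have := Rabs_def2 _ _ HH2. lra.
      - have Htsp0 : 0 < ts by (destruct Hts0; [lra|congruence]).
        have := proj1 (filterlim_locally _ (dI ts)) (Hcd ts Htsp0) (mkposreal _ Hpos).
        move=> [d Hdd]. exists d. split. apply cond_pos.
        intros y Hy. have := Hdd y. rewrite !ball_R /=. intros HH.
        have := HH ltac:(rewrite Rabs_pos_eq; lra).
        intros HH2. have := Rabs_def2 _ _ HH2. lra. }
    destruct Hdel as [d [Hd0 Hdd]].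
    set x := Rmin (ts + d / 2) ((ts + t) / 2).
    have Hx1 : ts < x by (apply Rmin_glb_lt; lra).
    have Hx2 : x <= ts + d / 2 by apply Rmin_l.
    have Hx3 : x <= (ts + t) / 2 by apply Rmin_r.
    have HEx : E x.
    { split. lra. intros s Hs.
      destruct (Rlt_or_le s ts) as [Hst|Hst]. apply Hbefore; lra.
      destruct (Rle_lt_or_eq_dec _ _ Hst) as [Hst'|Hst']. apply Hdd; lra. rewrite -Hst'. auto. }
    have := Hub x HEx. lra. }
  destruct (Req_dec ts 0) as [Hz|Hnz].
  { rewrite Hz in Hat. lra. }
  have Htsp : 0 < ts by lra.
  have Hinc : forall x y, 0 <= x < y -> y <= ts -> I x < I y.
  { intros x y Hxy Hyt.
    destruct (mvt_open (ext0 I) dI x y ltac:(lra) (fun z Hz => Hied z ltac:(lra)) (fun z _ => ext0_cpt I dI HC z)) as [c [Hc1 Hc2]].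
    rewrite !ext0_pos in Hc2; try lra.
    have := Hbefore c ltac:(lra). nra. }
  have Hpos : forall s, 0 <= s <= ts -> 0 < I s.
  { intros s Hs. destruct (Req_dec s 0) as [->|Hs0]. lra. have := Hinc 0 s ltac:(lra) ltac:(lra). lra. }
  have HJ : forall tau, 0 < tau <= ts -> RInt (fun s => lognormal mu sigma (tau - s) * I s) 0 tau < I tau.
  { intros tau Htau. rewrite conv_ext0; [|lra]. rewrite -(ext0_pos I tau); [|lra].
    apply conv_lt; auto. lra.
    intros s Hs. rewrite !ext0_pos; try lra. apply Hinc; lra.
    rewrite ext0_pos; [|lra]. have := Hpos tau ltac:(lra). lra. }
  have Hu : forall s, 0 <= s < ts -> I s < M.
  { intros s Hs. destruct (Req_dec s 0) as [->|Hs0]. lra.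
    destruct (Rlt_or_le (I s) M) as [|HIM]; auto. exfalso.
    have H1 := Hbefore s Hs. rewrite Hode in H1; [|lra].
    have H2 := HJ s ltac:(lra).
    have H3 : beta * (M - I s) <= 0 by nra.
    nra. }
  have HuT : I ts < M.
  { set phi := fun s => (M - ext0 I s) * exp (beta * M * s).
    set dphi := fun s => (- dI s) * exp (beta * M * s) + (M - ext0 I s) * (beta * M * exp (beta * M * s)).
    have Hphid : forall z, 0 < z < ts -> is_derive phi z (dphi z).
    { intros z Hz.
      have H1 : is_derive (fun s => M - ext0 I s) z (- dI z).
      { have := is_derive_minus (fun _ => M) (ext0 I) z zero (dI z) (is_derive_const M z) (Hied z ltac:(lra)).
        have -> : minus zero (dI z) = - dI z by (unfold minus, zero, plus, opp; simpl; Req; ring). auto. }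
      have H2 : is_derive (fun s => exp (beta * M * s)) z (beta * M * exp (beta * M * z)).
      { auto_derive. auto. Req. ring. }
      have H3 := is_derive_mult _ _ z _ _ H1 H2 (fun n m => Rmult_comm n m).
      unfold phi, dphi. move: H3. unfold plus, mult; simpl. auto. }
    have Hphic : forall z, 0 <= z <= ts -> continuity_pt phi z.
    { intros z _. apply continuity_pt_filterlim.
      apply: (continuous_mult (fun s => M - ext0 I s) (fun s => exp (beta * M * s))).
      apply: (continuous_minus (fun _ => M) (ext0 I)). apply continuous_const. apply Hiec.
      apply: ex_derive_continuous. auto_derive. auto. }
    destruct (mvt_open phi dphi 0 ts Htsp Hphid Hphic) as [c [Hc1 Hc2]].
    have Hdc : 0 <= dphi c.
    { unfold dphi. rewrite ext0_pos; [|lra]. rewrite Hode; [|lra].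
      have HMc := Hu c ltac:(lra).
      have Hcv := conv_ge0 mu sigma (ext0 I) c hsigma Hiec ltac:(lra) (fun s Hs => ltac:(rewrite ext0_pos; [|lra]; have := Hpos s ltac:(lra); lra)).
      rewrite conv_ext0; [|lra].
      have He := exp_pos (beta * M * c).
      set cv := RInt (fun s => lognormal mu sigma (c - s) * ext0 I s) 0 c.
      fold cv in Hcv.
      have Hform : - (beta * (M - I c) * (I c - cv)) * exp (beta * M * c) + (M - I c) * (beta * M * exp (beta * M * c))
        = beta * exp (beta * M * c) * ((M - I c) * (M - I c + cv)) by ring.
      rewrite Hform. apply Rmult_le_pos. nra. nra. }
    unfold phi in Hc2. rewrite !ext0_pos in Hc2; try lra.
    rewrite Rmult_0_r exp_0 Rmult_1_r HI0 Rminus_0_r in Hc2.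
    have Hets := exp_pos (beta * M * ts).
    destruct (Rlt_or_le (I ts) M) as [|HIM]; auto. exfalso.
    have : (M - I ts) * exp (beta * M * ts) <= 0 by nra.
    nra. }
  have HJts := HJ ts ltac:(lra).
  rewrite Hode in Hat; [|lra].
  have H3 : 0 < beta * (M - I ts) by nra.
  nra.
Qed.

Theorem proposition3p4 (M beta mu sigma I0 : R) (I dI : R -> R)
  (hM : 0 < M) (hbeta : 0 < beta) (hsigma : 0 < sigma)
  (hI0 : 0 <= I0 <= M)
  (hsol : is_solution beta M mu sigma I0 I dI) :
  (0 < I0 < M -> forall t, 0 <= t -> 0 < dI t) /\
  ((I0 = 0 \/ I0 = M) -> forall t, 0 <= t -> dI t = 0).
Proof.
  split.
  - exact (part1 M beta mu sigma I0 I dI hM hbeta hsigma hsol).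
  - exact (part2 M beta mu sigma I0 I dI hM hbeta hsigma hsol).
Qed.
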